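(* Let $M,N$ be equivalent canonical dtlas such that $M$ is a dtpla and $N$ is a dtop, and let $\varphi$ be the aheadness mapping from $N$ to $M$. Then (1) $A_N\Phi=\sqcap\{A_M(p)\Omega\mid p\in P_M\}$, and (2) for every $v\in\mathbb N_+^*$, $q\in Q_N$ and $p\in P_M$: if $A_N/v=q(x_0)$ then $\varphi(q,p)=A_M(p)\Omega/v$.
   Context: Trees and patterns. $T_\Delta(Z)$ is the set of trees over ranked alphabet $\Delta$ with extra nullary symbols $Z$; $t/v$ is the subtree at node $v\in\mathbb N_+^*$; $\bot$ is a special nullary symbol. $\sqcap T$ is the greatest lower bound of a finite nonempty set $T$ of trees w.r.t. the order $t\sqsubseteq t'$ ($t'$ obtained from $t$ by replacing occurrences of $\bot$ by trees): the largest common prefix with $\bot$ at the highest nodes of disagreement. A $\Sigma$-context is $C\in T_\Sigma(\{\bot\})$ with exactly one $\bot$; $\mathcal C_\Sigma$ is their set. $Q(Y)=\{q(y)\mid q\in Q,y\in Y\}$, $X=\{x_0,x_1,\dots\}$, $X_k=\{x_1,\dots,x_k\}$. Dtlas. A dtla $M$ from $\Sigma$ to $\Delta$ consists of a finite set $Q_M$ of states, a total deterministic bottom-up tree automaton with finite state set $P_M$ and transitions $\delta(a,p_1,\dots,p_k)$, extended to $\delta_M:T_\Sigma\to P_M$ ($[\![p]\!]_M=\delta_M^{-1}(p)$), axioms $A_M(p)\in T_\Delta(Q_M(\{x_0\}))$, and at most one rule $q(a(x_1\langle p_1\rangle,\dots,x_k\langle p_k\rangle))\to\mathrm{rhs}_M(q,a,p_1,\dots,p_k)\in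 T_\Delta(Q_M(X_k))$ per $q,a,p_1,\dots,p_k$. Semantics: $q_M(a(s_1,\dots,s_k))=\mathrm{rhs}_M(q,a,\delta_M(s_1),\dots,\delta_M(s_k))[q'(x_i)\leftarrow q'_M(s_i)]$, $M(s)=A_M(\delta_M(s))[q(x_0)\leftarrow q_M(s)]$; equivalent means equal translations. A dtop is a dtla with a single look-ahead state $\bot$; for a dtop $N$ its unique axiom is $A_N\in T_\Delta(Q_N(\{x_0\}))$. A dtpla has $|P_M|\ge2$. $M(C[p])\in T_\Delta(Q_M\times P_M)$ is the output on $C\in\mathcal C_\Sigma$ with the hole treated as a leaf of look-ahead state $p$ and $q_M(p)=\langle q,p\rangle$; $N(C)=N(C[\bot])$. A state $q$ is reachable if $\langle q,p\rangle$ labels a node of $M(C[p])$ for some $C,p$. $M$ is la-uniform if there is $\rho_M:Q_M\to P_M$ with domain of $[\![q]\!]_M$ equal to $[\![\rho_M(q)]\!]_M$, every $q(x_0)$ in $A_M(p)$ having $\rho_M(q)=p$, every $q'(x_i)$ in $\mathrm{rhs}_M(q,a,p_1,\dots,p_k)$ having $\rho_M(q')=p_i$, and the rule for $q,a,p_1,\dots,p_k$ existing iff $\delta(a,p_1,\dots,p_k)=\rho_M(q)$ (for a dtop, $\rho(q)=\bot$). Earliest: no state $q$ and $d\in\Delta$ such that $q(s)$ has root label $d$ for all $s$ in the domain of $[\![q]\!]$. Canonical: total, la-uniform, earliest, all states reachable, distinct states have distinct translations. For $t\in T_\Delta(Q(X))$ of an la-uniform dtla, $t\Omega$ replaces every $q(x_i)$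 by the leaf $\langle q,\rho(q)\rangle$ (for a dtop, by $\langle q,\bot\rangle$). For $t\in T_\Delta(Q_N(X))$, $t\Phi$ replaces every $q(x_i)$ by $\bot$. Aheadness mapping: the unique $\varphi:Q_N\times P_M\to T_\Delta(Q_M\times P_M)$ with $M(C[p])=N(C)[\langle q,\bot\rangle\leftarrow\varphi(q,p)\mid q\in Q_N]$ for all $C\in\mathcal C_\Sigma$, $p\in P_M$. *)

(* Defs.v *)
From HB Require Import structures.
From mathcomp Require Import all_boot.
From Stdlib Require List.

Set Implicit Arguments.
Unset Strict Implicit.
Unset Printing Implicit Defensive.

(* A tree over a ranked alphabet D with extra nullary symbols Z,       *)
(* i.e. an element of T_D(Z), is an [otree (D + Z)] that is well-ranked *)
(* for the rank function [rkX rk] (inr-symbols are nullary).            *)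
Inductive otree (L : Type) : Type := Nd : L -> seq (otree L) -> otree L.
Arguments Nd {L} _ _.

Definition leaf {L : Type} (l : L) : otree L := Nd l [::].

Definition rkX {D Z : Type} (rk : D -> nat) (x : D + Z) : nat :=
  match x with inl d => rk d | inr _ => 0 end.

Fixpoint wr {L : Type} (rk : L -> nat) (t : otree L) : bool :=
  match t with Nd l ts => (size ts == rk l) && all (wr rk) ts end.

Fixpoint vars {D Z : Type} (t : otree (D + Z)) : seq Z :=
  match t with
  | Nd (inr z) _ => [:: z]
  | Nd (inl _) ts => flatten (map vars ts)
  end.

Fixpoint oall {X : Type} (l : seq (option X)) : option (seq X) :=
  match l with
  | [::] => Some [::]
  | None :: _ => None
  | Some x :: l' => match oall l' with Some xs => Some (x :: xs) | None => None end
  end.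

Fixpoint tsubo {D Z W : Type} (g : Z -> option (otree (D + W)))
    (t : otree (D + Z)) : option (otree (D + W)) :=
  match t with
  | Nd (inr z) _ => g z
  | Nd (inl d) ts => option_map (Nd (inl d)) (oall (map (tsubo g) ts))
  end.

Fixpoint tsub {D Z W : Type} (g : Z -> otree (D + W))
    (t : otree (D + Z)) : otree (D + W) :=
  match t with
  | Nd (inr z) _ => g z
  | Nd (inl d) ts => Nd (inl d) (map (tsub g) ts)
  end.

(* subtree t/v at node v in N_+^* (None if v is not a node of t) *)
Fixpoint subt {L : Type} (t : otree L) (v : seq nat) : option (otree L) :=
  match v with
  | [::] => Some t
  | i :: v' =>
      match t with
      | Nd _ ts =>
          if i is 0 then None else
          match onth ts i.-1 with Some t' => subt t' v' | None => None end
      end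
  end.

(* Order on T_D(Z ∪ {⊥}) (⊥ = inr None): t ⊑ t' iff t' is obtained from t
   by replacing occurrences of ⊥ by trees. *)
Fixpoint tle {D Z : Type} (t t' : otree (D + option Z)) : Prop :=
  match t with
  | Nd (inr None) [::] => True
  | Nd l ts =>
      match t' with
      | Nd l' ts' =>
          l = l' /\
          (fix go (us us' : seq (otree (D + option Z))) : Prop :=
             match us, us' with
             | [::], [::] => True
             | u :: us0, u' :: us0' => tle u u' /\ go us0 us0'
             | _, _ => False
             end) ts ts'
      end
  end.

Definition is_glb {D Z : Type} (S : otree (D + option Z) -> Prop)
    (g : otree (D + option Z)) : Prop :=
  (forall t, S t -> tle g t) /\
  (forall l, (forall t, S t -> tle l t) -> tle l g).

(* Deterministic top-down tree transducers with regular look-ahead.    *)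
Section Dtla.
Variables (Sig Del : finType) (rkS : Sig -> nat) (rkD : Del -> nat).

(* Input trees: otree (Sig + Y); the inr-leaves are "holes".
   T_Sig = trees with Y = void; Sigma-contexts: Y = unit, exactly one hole. *)
Record dtla : Type := Dtla {
  Qs : finType;
  Ps : finType;
  delta : Sig -> seq Ps -> Ps;                    (* total bottom-up automaton *)
  axm : Ps -> otree (Del + Qs);                   (* A_M(p); leaf inr q = q(x0) *)
  rhs : Qs -> Sig -> seq Ps -> option (otree (Del + (Qs * nat)))
        (* rhs_M(q,a,p1..pk); leaf inr (q',i) = q'(x_i); None = no rule *)
}.
Arguments delta : clear implicits.
Arguments axm : clear implicits.
Arguments rhs : clear implicits.

Variable M : dtla.

Definition wf_dtla : Prop :=
  (forall p, wr (rkX rkD) (axm M p)) /\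
  (forall q a ps r, size ps = rkS a -> rhs M q a ps = Some r ->
     wr (rkX rkD) r /\ (forall q' i, List.In (q', i) (vars r) -> 0 < i <= rkS a)).

Section Run.
Variables (Y W : Type) (h : Y -> Ps M) (hout : Qs M -> Y -> otree (Del + W)).

Fixpoint dst (s : otree (Sig + Y)) : Ps M :=
  match s with
  | Nd (inl a) ss => delta M a (map dst ss)
  | Nd (inr y) _ => h y
  end.

(* q_M(s) (partial); on a hole y, q_M(y) = hout q y *)
Fixpoint qsem (s : otree (Sig + Y)) : Qs M -> option (otree (Del + W)) :=
  match s with
  | Nd (inr y) _ => fun q => Some (hout q y)
  | Nd (inl a) ss =>
      let fs := map qsem ss in
      let ps := map dst ss in
      fun q =>
        match rhs M q a ps with
        | None => None
        | Some r =>
            tsubo (fun qi : Qs M * nat =>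
                     match onth fs qi.2.-1 with
                     | Some f => f qi.1
                     | None => None
                     end) r
        end
  end.

Definition msem (s : otree (Sig + Y)) : option (otree (Del + W)) :=
  tsubo (fun q => qsem s q) (axm M (dst s)).
End Run.

Definition Tin := otree (Sig + void).
Definition wrIn (s : Tin) : bool := wr (rkX rkS) s.
Definition vh (y : void) : Ps M := match y with end.
Definition vo (q : Qs M) (y : void) : otree (Del + void) := match y with end.
Definition dst0 (s : Tin) : Ps M := dst vh s.
Definition qsem0 (s : Tin) (q : Qs M) : option (otree (Del + void)) := qsem vh vo s q.
Definition msem0 (s : Tin) : option (otree (Del + void)) := msem vh vo s.

(* Sigma-contexts: trees in T_Sig({⊥}) with exactly one ⊥ (= inr tt) *)
Definition is_context (C : otree (Sig + unit)) : Prop :=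
  wr (rkX rkS) C /\ size (vars C) = 1.

(* M(C[p]) in T_Del(Q_M x P_M), with q_M(p) = <q,p> *)
Definition msemC (C : otree (Sig + unit)) (p : Ps M) :
    option (otree (Del + (Qs M * Ps M))) :=
  msem (fun _ : unit => p) (fun q (_ : unit) => leaf (inr (q, p))) C.

Definition total : Prop := forall s, wrIn s -> msem0 s <> None.

Definition la_uniform (rho : Qs M -> Ps M) : Prop :=
  (forall q s, wrIn s -> (qsem0 s q <> None <-> dst0 s = rho q)) /\
  (forall p q, List.In q (vars (axm M p)) -> rho q = p) /\
  (forall q a ps r, size ps = rkS a -> rhs M q a ps = Some r ->
     forall q' i, List.In (q', i) (vars r) -> onth ps i.-1 = Some (rho q')) /\
  (forall q a ps, size ps = rkS a ->
     (rhs M q a ps <> None <-> delta M a ps = rho q)).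

Definition earliest : Prop :=
  ~ exists (q : Qs M) (d : Del),
      forall s, wrIn s -> qsem0 s q <> None ->
        exists ts, qsem0 s q = Some (Nd (inl d) ts).

Definition reachable (q : Qs M) : Prop :=
  exists C p t, is_context C /\ msemC C p = Some t /\ List.In (q, p) (vars t).

Definition distinct_translations : Prop :=
  forall q q' : Qs M, q <> q' ->
    ~ (forall s, wrIn s -> qsem0 s q = qsem0 s q').

Definition canonical (rho : Qs M -> Ps M) : Prop :=
  total /\ la_uniform rho /\ earliest /\ (forall q, reachable q) /\
  distinct_translations.

Definition is_dtop : Prop := #|Ps M| = 1.
Definition is_dtpla : Prop := 2 <= #|Ps M|.

Definition Omega (rho : Qs M -> Ps M) (t : otree (Del + Qs M)) :
    otree (Del + (Qs M * Ps M)) :=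
  tsub (fun q => leaf (inr (q, rho q))) t.

End Dtla.

Arguments Qs {Sig Del}.
Arguments canonical {Sig Del} rkS M rho.
Arguments la_uniform {Sig Del} rkS M rho.
Arguments qsem0 {Sig Del} M s q.
Arguments msemC {Sig Del} M C p.
Arguments msem0 {Sig Del} M s.
Arguments axm {Sig Del} d _.
Arguments Omega {Sig Del} M rho t.
Arguments Ps {Sig Del}.

Definition equivalent {Sig Del : finType} (rkS : Sig -> nat) (M N : dtla Sig Del) : Prop :=
  forall s : Tin Sig, wrIn rkS s -> msem0 M s = msem0 N s.

Definition Phi {Del Q Z : Type} (t : otree (Del + Q)) : otree (Del + option Z) :=
  tsub (fun _ => leaf (inr None)) t.

Definition embB {Del Z : Type} (t : otree (Del + Z)) : otree (Del + option Z) :=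
  tsub (fun z => leaf (inr (Some z))) t.

(* phi is the aheadness mapping from the dtop N to M:
   M(C[p]) = N(C)[<q,⊥> <- phi(q,p)] for all contexts C and p in P_M
   (bot is the unique look-ahead state of N). *)
Definition is_aheadness {Sig Del : finType} (rkS : Sig -> nat)
    (M N : dtla Sig Del) (bot : Ps N)
    (phi : Qs N -> Ps M -> otree (Del + (Qs M * Ps M))) : Prop :=
  forall C p, is_context rkS C ->
    msemC M C p = option_map (tsub (fun qb : Qs N * Ps N => phi qb.1 p)) (msemC N C bot).
Arguments is_aheadness {Sig Del} rkS M N bot phi.

(* Main.v *)
Require Import Defs.
From HB Require Import structures.
From mathcomp Require Import all_boot.
From Stdlib Require List.

Module Aux.
Set Implicit Arguments.
Section Ind.
Variables (L : Type) (P : otree L -> Prop).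
Hypothesis H : forall l ts, (forall t, List.In t ts -> P t) -> P (Nd l ts).
Fixpoint otree_ind2 (t : otree L) : P t :=
  match t with
  | Nd l ts => H l ts
      ((fix G (us : seq (otree L)) : forall u, List.In u us -> P u :=
          match us with
          | [::] => fun u (h : List.In u [::]) => False_ind _ h
          | u0 :: us' => fun u h =>
              match h with
              | or_introl e => eq_ind u0 P (otree_ind2 u0) u e
              | or_intror h' => G us' u h'
              end
          end) ts)
  end.
End Ind.

Lemma map_ext_In (A B : Type) (f g : A -> B) (s : seq A) :
  (forall x, List.In x s -> f x = g x) -> map f s = map g s.
Proof. elim: s => //= a s IH H. rewrite H; last by left. by rewrite IH // => x hx; apply: H; right. Qed.

Lemma In_flatten_vars (D Z : Type) (ts : seq (otree (D + Z))) z :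
  List.In z (flatten (map vars ts)) -> exists t, List.In t ts /\ List.In z (vars t).
Proof.
elim: ts => //= t ts IH. move=> h.
have [h1|h2] : List.In z (vars t) \/ List.In z (flatten (map vars ts)).
  elim: (vars t) h => /=; [by right|]. move=> a l IH2 [->|h']; [by left; left|].
  by case: (IH2 h') => [h3|h3]; [left; right|right].
- by exists t; split => //; left.
- by case: (IH h2) => u [hu hz]; exists u; split => //; right.
Qed.

Lemma In_vars_flatten (D Z : Type) (ts : seq (otree (D + Z))) t z :
  List.In t ts -> List.In z (vars t) -> List.In z (flatten (map vars ts)).
Proof.
elim: ts => //= u ts IH [<-|h] hz.
- elim: (vars u) hz => //= a l IH2 [->|h']; [by left| by right; apply: IH2].
- have := IH h hz. elim: (vars u) => //= a l IH2 h'; by right; apply: IH2.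
Qed.

Arguments In_flatten_vars {D Z ts z}.
Arguments In_vars_flatten {D Z ts t z}.
Lemma tsubo_Some (D Z W : Type) (g : Z -> otree (D + W)) t :
  tsubo (fun z => Some (g z)) t = Some (tsub g t).
Proof.
elim/otree_ind2: t => [[d|z] ts IH] //=.
have -> : oall (map (tsubo (fun z => Some (g z))) ts) = Some (map (tsub g) ts).
  elim: ts IH => //= u us IH2 H. rewrite H; last by left.
  by rewrite IH2 // => x hx; apply: H; right.
by [].
Qed.

Lemma tsub_tsub (D Z W V : Type) (g : W -> otree (D + V)) (f : Z -> otree (D + W)) t :
  tsub g (tsub f t) = tsub (fun z => tsub g (f z)) t.
Proof.
elim/otree_ind2: t => [[d|z] ts IH] //=. rewrite -map_comp. congr Nd.
by apply: map_ext_In => x hx /=; apply: IH.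
Qed.

Lemma tsubo_tsub (D Z W V : Type) (g : W -> option (otree (D + V))) (f : Z -> otree (D + W)) t :
  tsubo g (tsub f t) = tsubo (fun z => tsubo g (f z)) t.
Proof.
elim/otree_ind2: t => [[d|z] ts IH] //=. rewrite -map_comp.
by rewrite (@map_ext_In _ _ (tsubo g \o tsub f) (tsubo (fun z => tsubo g (f z))) ts) // => x hx /=; apply: IH.
Qed.

Lemma tsub_ext (D Z W : Type) (f g : Z -> otree (D + W)) t :
  (forall z, List.In z (vars t) -> f z = g z) -> tsub f t = tsub g t.
Proof.
elim/otree_ind2: t => [[d|z] ts IH] //= H; last by apply: H; left.
congr Nd; apply: map_ext_In => x hx; apply: IH => // z hz; apply: H.
exact: In_vars_flatten hx hz.
Qed.

Lemma vars_tsub (D Z W : Type) (f : Z -> otree (D + W)) t z w :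
  List.In z (vars t) -> List.In w (vars (f z)) -> List.In w (vars (tsub f t)).
Proof.
elim/otree_ind2: t => [[d|z'] ts IH] /=.
- move=> hin hw; case: (In_flatten_vars hin) => u [hu hz].
  apply: (@In_vars_flatten _ _ (map (tsub f) ts) (tsub f u)).
  + exact: List.in_map.
  + exact: IH hu hz hw.
- by case=> // <-.
Qed.

Lemma vars_tsub_leaf (D Z W : Type) (h : Z -> W) t w :
  List.In w (vars (tsub (fun z => @leaf (D + W) (inr (h z))) t)) ->
  exists z, List.In z (vars t) /\ w = h z.
Proof.
elim/otree_ind2: t => [[d|z'] ts IH] /=.
- move=> hin; case: (In_flatten_vars hin) => u [/List.in_map_iff [x [<- hx]] hw].
  case: (IH _ hx hw) => z [hz ->]. exists z; split => //.
  exact: In_vars_flatten hx hz.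
- by case=> // <-; exists z'; split => //; left.
Qed.

Lemma oall_agree (A B : Type) (f g : A -> option B) ts xs :
  oall (map f ts) = Some xs -> oall (map g ts) = Some xs ->
  forall t, List.In t ts -> exists x, f t = Some x /\ g t = Some x.
Proof.
elim: ts xs => //= t ts IH xs.
case Ef: (f t) => [a|] //; case E1: (oall (map f ts)) => [l1|] // [<-].
case Eg: (g t) => [b|] //; case E2: (oall (map g ts)) => [l2|] // [eb el] u [<-|hu].
- by exists a; rewrite Ef Eg eb.
- subst l2. exact: IH E1 E2 u hu.
Qed.

Lemma tsubo_agree (D Z W : Type) (g1 g2 : Z -> option (otree (D + W))) t r :
  tsubo g1 t = Some r -> tsubo g2 t = Some r ->
  forall z, List.In z (vars t) -> g1 z = g2 z.
Proof.
elim/otree_ind2: t r => [[d|z'] ts IH] r /=.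
- case E1: (oall _) => [l1|] // [<-]. case E2: (oall _) => [l2|] // [el].
  subst l2. move=> z hin; case: (In_flatten_vars hin) => u [hu hz].
  case: (@oall_agree _ _ _ _ ts l1 E1 E2 u hu) => x [h1 h2]. exact: IH hu x h1 h2 z hz.
- by move=> h1 h2 z [<-|] //; rewrite h1 h2.
Qed.

Lemma all_onth (A : Type) (p : A -> bool) ts i t :
  onth ts i = Some t -> all p ts -> p t.
Proof.
elim: ts i => [|t0 ts IH] [|i] //=.
  by move=> [e] /andP [h _]; rewrite -e.
by move=> E /andP [_ h]; apply: IH E h.
Qed.

Lemma subt_tsub (D Z W : Type) (rk : D + Z -> nat) (F : Z -> otree (D + W)) v t q us :
  (forall z, rk (inr z) = 0) -> wr rk t ->
  subt t v = Some (Nd (inr q) us) -> subt (tsub F t) v = Some (F q).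
Proof.
move=> hrk. elim: v t => [|i v IH] [[d|z] ts] /=.
- by move=> _ [].
- by move=> _ [-> _].
- case/andP => _ hall. case: i => // i. rewrite /= onth_map.
  case E: (onth ts i) => [t'|] //= hs. apply: IH hs.
  exact: all_onth E hall.
- case/andP => /eqP; rewrite hrk => /size0nil -> _.
  by case: i => [|i] /=; rewrite ?onth0n.
Qed.
Definition root {L : Type} (t : otree L) : L := match t with Nd l _ => l end.

Lemma tle_node (D Z : Type) (lab : D + option Z) ls l' ts' :
  ~ (lab = inr None /\ ls = [::]) ->
  tle (Nd lab ls) (Nd l' ts') <-> (lab = l' /\ List.Forall2 tle ls ts').
Proof.
move=> hn.
have E : tle (Nd lab ls) (Nd l' ts') = (lab = l' /\
   (fix go (us us' : seq (otree (D + option Z))) : Prop :=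
             match us, us' with
             | [::], [::] => True
             | u :: us0, u' :: us0' => tle u u' /\ go us0 us0'
             | _, _ => False
             end) ls ts').
  by case: lab hn => [d|[z|]] hn //; case: ls hn => [hn|] //; case: hn.
rewrite E; split; case=> e h; split => //.
- elim: ls ts' {hn E} h => [|u us IH] [|u' us'] //= [h1 h2].
  by constructor => //; apply: IH.
- elim: h => //= u u' us us' h1 _ h2; split.
Qed.

Lemma tle_root (D Z : Type) (lab : D + option Z) ls t :
  ~ (lab = inr None /\ ls = [::]) -> tle (Nd lab ls) t -> lab = root t.
Proof. by case: t => l' ts' hn /(tle_node _ _ hn) []. Qed.


Lemma dec_bot (D Z : Type) (lab : D + option Z) (ls : seq (otree (D + option Z))) :
  (lab = inr None /\ ls = [::]) \/ ~ (lab = inr None /\ ls = [::]).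
Proof.
case: lab => [x|[x|]]; [right; case=> // | right; case => // | case: ls => [|? ?]; [by left | right; case => //]].
Qed.

Lemma tsub_inl (D Z W : Type) (g : Z -> otree (D + W)) d ts :
  tsub g (Nd (inl d) ts) = Nd (inl d) (map (tsub g) ts).
Proof. by []. Qed.

Lemma tle_Phi_embB (D Q Z : Type) (f : Q -> otree (D + Z)) t :
  tle (Phi t : otree (D + option Z)) (embB (tsub f t)).
Proof.
elim/otree_ind2: t => [[d|q] ts IH] //.
rewrite /Phi /embB !tsub_inl. apply: (proj2 (@tle_node _ _ _ _ _ _ _)); first by case.
split => //. elim: ts IH => //= u us IH2 H. constructor.
- exact: (H u (or_introl erefl)).
- by apply: IH2 => x hx; apply: H; right.
Qed.

Lemma glb_Phi (D Q Z P : Type) (p0 : P) (F : Q -> P -> otree (D + Z)) t :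
  (forall q, List.In q (vars t) -> forall lab, ~ (forall p, root (embB (F q p)) = lab)) ->
  forall l, (forall p, tle l (embB (tsub (fun q => F q p) t))) ->
  tle l (Phi t : otree (D + option Z)).
Proof.
elim/otree_ind2: t => [[d|q] ts IH] hF [lab ls] hl.
- have [hb|hn] : (lab = inr None /\ ls = [::]) \/ ~ (lab = inr None /\ ls = [::]).
    exact: dec_bot.
  + by case: hb => -> ->.
  + have e0 := @tle_root _ _ _ _ _ hn (hl p0). rewrite /Phi tsub_inl in e0 *. apply: (proj2 (@tle_node _ _ _ _ _ _ hn)).
    split => //.
    have hall : forall p, List.Forall2 tle ls (map (fun u => embB (tsub (fun q => F q p) u)) ts).
      move=> p; have := hl p; rewrite /embB !tsub_inl => /(tle_node _ _ hn) [_]. by rewrite -map_comp.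
    clear hl e0 hn.
    have hF' : forall u, List.In u ts -> forall q, List.In q (vars u) ->
        forall lab, ~ (forall p, root (embB (F q p)) = lab).
      by move=> u hu q hq; apply: hF; apply: In_vars_flatten hu hq.
    clear hF. elim: ts ls IH hF' hall => [|u us IH2] ls IH hF' hall.
    * by have h0 := hall p0; inversion h0; constructor.
    * have h0 := hall p0; inversion h0; subst. constructor.
      -- apply: (IH u (or_introl erefl)); first by apply: hF'; left.
         by move=> p; have := hall p; move=> h'; inversion h'.
      -- apply: IH2 => //.
         ++ by move=> y0 hy0; apply: IH; right.
         ++ by move=> y0 hy0; apply: hF'; right.
         ++ by move=> p; have := hall p; move=> h'; inversion h'.
- have [hb|hn] : (lab = inr None /\ ls = [::]) \/ ~ (lab = inr None /\ ls = [::]).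
    exact: dec_bot.
  + by case: hb => -> ->.
  + exfalso. apply: (hF q (or_introl erefl) lab) => p.
    have := @tle_root _ _ _ _ _ hn (hl p). by [].
Qed.
End Aux.
Import Aux.

Theorem mainTheorem7 (Sig Del : finType) (rkS : Sig -> nat) (rkD : Del -> nat)
  (M N : dtla Sig Del)
  (wfM : wf_dtla rkS rkD M) (wfN : wf_dtla rkS rkD N)
  (rhoM : Qs M -> Ps M) (rhoN : Qs N -> Ps N)
  (canM : canonical rkS M rhoM) (canN : canonical rkS N rhoN)
  (eqMN : equivalent rkS M N)
  (hM : is_dtpla M) (hN : is_dtop N) (bot : Ps N)
  (phi : Qs N -> Ps M -> otree (Del + (Qs M * Ps M)))
  (hphi : is_aheadness rkS M N bot phi) :
  is_glb (fun t => exists p : Ps M, t = embB (Omega M rhoM (axm M p)))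
         (Phi (axm N bot))
  /\
  (forall (v : seq nat) (q : Qs N) (p : Ps M),
     all (fun i => 0 < i) v ->
     subt (axm N bot) v = Some (leaf (inr q)) ->
     Some (phi q p) = subt (Omega M rhoM (axm M p)) v).
Proof.
case: canM => [totM [[lu1 [lu2 [lu3 lu4]]] [earM [reachM distM]]]].
case: canN => [totN [luN [earN [reachN distN]]]].
pose hole := (Nd (inr tt) [::] : otree (Sig + unit)).
have hctx : is_context rkS hole by [].
have Step1 : forall p, Omega M rhoM (axm M p) = tsub (fun q => phi q p) (axm N bot).
  move=> p. have := hphi hole p hctx.
  rewrite /msemC /msem /=.
  rewrite (tsubo_Some (fun q => leaf (inr (q, p)))).
  rewrite (tsubo_Some (fun q => leaf (inr (q, bot)))) /= => -[e].
  rewrite tsub_tsub /= in e. rewrite -e /Omega.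
  apply: tsub_ext => z hz. by rewrite (lu2 p z hz).
have hbot : forall x : Ps N, x = bot.
  case: (mem_card1 hN) => x0 hx0 x.
  have h1 := hx0 x; have h2 := hx0 bot.
  rewrite !inE in h1 h2. by rewrite (eqP (esym h1)) (eqP (esym h2)).
case/card_gt1P: hM => p1 [p2 [_ _ hp12]].
split; last first.
  move=> v q p _ hv. rewrite Step1. symmetry.
  apply: (@subt_tsub _ _ _ (rkX rkD) _ v (axm N bot) q [::]) => //.
  exact: (wfN.1 bot).
have noroot : forall q, List.In q (vars (axm N bot)) ->
    forall lab, ~ (forall p, root (embB (phi q p)) = lab).
  move=> q hq lab Hall.
  case E1: (phi q p1) => [[d|z] us1].
  - (* all rooted at inl d: contradict earliest of N *)
    apply: earN. exists q, d => s ws nn.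
    pose p := dst0 M s.
    have e1 : msem0 M s = tsubo (fun q => tsubo (fun z => qsem0 M s z.1) (phi q p)) (axm N bot).
      rewrite -tsubo_tsub -Step1 /Omega tsubo_tsub. by [].
    have e2 : msem0 N s = tsubo (qsem0 N s) (axm N bot).
      by rewrite /msem0 /msem -/(dst0 N s) (hbot (dst0 N s)).
    have := totN s ws. case E: (msem0 N s) => [r|] // _.
    have ag := @tsubo_agree _ _ _ _ _ _ _ (etrans (esym e2) E) (etrans (esym e1) (etrans (eqMN s ws) E)) q hq.
    have hl : lab = inl d by rewrite -(Hall p1) E1.
    move: (Hall p); rewrite hl /= ag.
    case E2: (phi q p) => [[d'|z'] us'] /= h; last by discriminate h.
    case: h => <-. move: nn; rewrite ag E2 /=. case: (oall _) => //= ts _; by exists ts.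
  - have key : forall p, List.In z (vars (phi q p)) -> z.2 = p.
      move=> p hz. have hv := @vars_tsub _ _ _ (phi^~ p) (axm N bot) q z hq hz.
      rewrite -Step1 /Omega in hv. case: (@vars_tsub_leaf _ _ _ (fun q => (q, rhoM q)) (axm M p) z hv) => q' [hq' ->] /=.
      exact: lu2.
    have hl : lab = inr (Some z) by rewrite -(Hall p1) E1.
    have k1 : z.2 = p1 by apply: key; rewrite E1; left.
    move: (Hall p2); rewrite hl.
    case E2: (phi q p2) => [[d'|z'] us'] /= h; first by discriminate h.
    case: h => ez; subst z'.
    have k2 : z.2 = p2 by apply: key; rewrite E2; left.
    by move: hp12; rewrite -k1 -k2 eqxx.
split.
- move=> t [p ->]. rewrite Step1. exact: tle_Phi_embB.
- move=> l hl. apply: (@glb_Phi _ _ _ _ p1 phi (axm N bot) noroot l) => p.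
  apply: hl. exists p. by rewrite Step1.
Qed.
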